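(* Let $Q$ be a function from a recursive subset of $\mathbb{N}^3$ to $\mathbb{N}$ such that $Q(n,k,s)\in B^n$ whenever defined, and let $r>1$. Then there exists a coloring function $c:\mathbb{N}\rightarrow r=\{0,\dots,r-1\}$, uniformly recursive in $Q$, such that for every $w\in\mathbb{Z}^+$ and every $n<\lambda(w)$, if $Q(n,\lambda(w),\mu(w))$ is defined then $c(w+Q(n,\lambda(w),\mu(w)))\equiv c(w)+1\pmod r$.
   Context: For $x=\sum_{i=0}^{k}2^{n_i}\in\mathbb{Z}^+$ with $n_0<\cdots<n_k$, set $\mu(x)=n_k$ and $\lambda(x)=n_0$. For each $n$, $B^n=\{x\in\mathbb{Z}^+:\mu(x)=n\}$. *)

(* Defs.v *)
From mathcomp Require Import all_boot.
Set Implicit Arguments.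
Unset Strict Implicit.
Unset Printing Implicit Defensive.

(* mu x = n_k : the exponent of the leading binary digit of x (x > 0),
   i.e. the largest n with 2^n <= x. *)
Definition bmu (x : nat) : nat := trunc_log 2 x.
(* lambda x = n_0 : the exponent of the lowest binary digit of x (x > 0),
   i.e. the 2-adic valuation of x. *)
Definition blambda (x : nat) : nat := logn 2 x.
Definition inB (n x : nat) : Prop := 0 < x /\ bmu x = n.

Inductive rterm : Type :=
| RZero
| RSucc
| RProj (i : nat)
| ROracle
| RComp (f : rterm) (gs : seq rterm)
| RPrec (f g : rterm)
| RMu (f : rterm).

Inductive eval (O : nat -> nat -> nat -> nat) : rterm -> seq nat -> nat -> Prop :=
| eZero v : eval O RZero v 0
| eSucc v : eval O RSucc v (nth 0 v 0).+1
| eProj i v : eval O (RProj i) v (nth 0 v i)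
| eOracle v : eval O ROracle v (O (nth 0 v 0) (nth 0 v 1) (nth 0 v 2))
| eComp f gs v ys y :
    evals O gs v ys -> eval O f ys y -> eval O (RComp f gs) v y
| ePrec0 f g v y : eval O f v y -> eval O (RPrec f g) (0 :: v) y
| ePrecS f g n v z y :
    eval O (RPrec f g) (n :: v) z -> eval O g (n :: z :: v) y ->
    eval O (RPrec f g) (n.+1 :: v) y
| eMu f v n :
    eval O f (n :: v) 0 ->
    (forall m, m < n -> exists k, eval O f (m :: v) k.+1) ->
    eval O (RMu f) v n
with evals (O : nat -> nat -> nat -> nat) : seq rterm -> seq nat -> seq nat -> Prop :=
| esNil v : evals O [::] v [::]
| esCons g gs v y ys : eval O g v y -> evals O gs v ys -> evals O (g :: gs) v (y :: ys).

Definition oracle_of (Q : nat -> nat -> nat -> option nat) : nat -> nat -> nat -> nat :=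
  fun n k s => if Q n k s is Some v then v.+1 else 0.

(* The domain of Q is a recursive subset of N^3 (computable without oracle). *)
Definition recursive_domain (Q : nat -> nat -> nat -> option nat) : Prop :=
  exists d : rterm, forall n k s,
    eval (fun _ _ _ => 0) d [:: n; k; s] (if Q n k s is Some _ then 1 else 0).

(* Main.v *)
Require Import Defs.
From mathcomp Require Import all_boot.
From mathcomp Require Import zify.
Set Implicit Arguments. Unset Strict Implicit. Unset Printing Implicit Defensive.

Notation P := RProj.

Fixpoint PR (F G : seq nat -> nat) (w : seq nat) (n : nat) : nat :=
  match n with 0 => F w | k.+1 => G (k :: PR F G w k :: w) end.

Section Comp.
Variable O : nat -> nat -> nat -> nat.
Definition computes t (f : seq nat -> nat) := forall v, eval O t v (f v).
Definition computess ts (fs : seq (seq nat -> nat)) :=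
  forall v, evals O ts v [seq h v | h <- fs].

Lemma c_zero : computes RZero (fun _ => 0). Proof. move=> v; constructor. Qed.
Lemma c_succ : computes RSucc (fun v => (nth 0 v 0).+1). Proof. move=> v; constructor. Qed.
Lemma c_proj i : computes (P i) (fun v => nth 0 v i). Proof. move=> v; constructor. Qed.
Lemma c_orc : computes ROracle (fun v => O (nth 0 v 0) (nth 0 v 1) (nth 0 v 2)).
Proof. move=> v; constructor. Qed.
Lemma c_nil : computess [::] [::]. Proof. move=> v; constructor. Qed.
Lemma c_cons t f ts fs : computes t f -> computess ts fs -> computess (t :: ts) (f :: fs).
Proof. move=> H1 H2 v; constructor; [exact: H1 | exact: H2]. Qed.
Lemma c_comp t f ts fs : computes t f -> computess ts fs ->
  computes (RComp t ts) (fun v => f [seq h v | h <- fs]).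
Proof. move=> H1 H2 v; econstructor; [exact: H2 | exact: H1]. Qed.
Lemma c_precC f F g G a A ts fs : computes f F -> computes g G -> computes a A ->
  computess ts fs ->
  computes (RComp (RPrec f g) (a :: ts)) (fun v => PR F G [seq h v | h <- fs] (A v)).
Proof.
move=> HF HG HA Hs v; econstructor.
  by constructor; [exact: HA | exact: Hs].
elim: (A v) => [|n IH] /=; first by constructor; exact: HF.
by econstructor; [exact: IH | exact: HG].
Qed.
Lemma c_ext t f g : computes t f -> (forall v, f v = g v) -> computes t g.
Proof. by move=> H E v; rewrite -E. Qed.
End Comp.

Ltac known := fail.
Ltac build0 := first [ apply c_nil | apply c_cons | apply c_precC | apply c_comp
  | apply c_proj | apply c_zero | apply c_succ | apply c_orc ].

Definition addT := RComp (RPrec (P 0) (RComp RSucc [:: P 1])) [:: P 0; P 1].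
Lemma c_add O : computes O addT (fun v => nth 0 v 0 + nth 0 v 1).
Proof.
eapply c_ext. rewrite /addT. repeat build0.
move=> v /=. elim: (nth 0 v 0) => //= n ->. by [].
Qed.

Fixpoint cst k := if k is k'.+1 then RComp RSucc [:: cst k'] else RZero.
Lemma c_cst O k : computes O (cst k) (fun _ => k).
Proof. elim: k => [|k IH] /=; first exact: c_zero.
eapply c_ext. repeat first [exact IH | build0]. by []. Qed.

Definition mulT := RComp (RPrec RZero (RComp addT [:: P 1; P 2])) [:: P 0; P 1].
Definition predT := RComp (RPrec RZero (P 0)) [:: P 0].
Definition subT := RComp (RPrec (P 0) (RComp predT [:: P 1])) [:: P 1; P 0].
Definition iszT := RComp (RPrec (cst 1) (cst 0)) [:: P 0].
Definition sgT := RComp (RPrec (cst 0) (cst 1)) [:: P 0].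
Definition oddT := RComp (RPrec RZero (RComp iszT [:: P 1])) [:: P 0].
Definition halfT := RComp (RPrec RZero (RComp addT [:: P 1; RComp oddT [:: P 0]])) [:: P 0].
Definition pow2T := RComp (RPrec (cst 1) (RComp addT [:: P 1; P 1])) [:: P 0].
Definition divpT := RComp (RPrec (P 0) (RComp halfT [:: P 1])) [:: P 0; P 1].

Ltac known ::= first [ apply c_add | apply c_cst ].
Ltac bld := repeat first [ known | build0 ].

Lemma c_mul O : computes O mulT (fun v => nth 0 v 0 * nth 0 v 1).
Proof. eapply c_ext. rewrite /mulT. bld.
move=> v /=. elim: (nth 0 v 0) => //= n ->. by rewrite mulSn addnC. Qed.
Lemma c_pred O : computes O predT (fun v => (nth 0 v 0).-1).
Proof. eapply c_ext. rewrite /predT. bld.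
move=> v /=. by case: (nth 0 v 0). Qed.
Ltac known ::= first [ apply c_add | apply c_cst | apply c_mul | apply c_pred ].
Lemma c_sub O : computes O subT (fun v => nth 0 v 0 - nth 0 v 1).
Proof. eapply c_ext. rewrite /subT. bld.
move=> v /=. elim: (nth 0 v 1) => /= [|n ->]; by rewrite ?subn0 ?subnS. Qed.
Lemma c_isz O : computes O iszT (fun v => nth 0 v 0 == 0).
Proof. eapply c_ext. rewrite /iszT. bld.
move=> v /=. by case: (nth 0 v 0). Qed.
Lemma c_sg O : computes O sgT (fun v => 0 < nth 0 v 0).
Proof. eapply c_ext. rewrite /sgT. bld.
move=> v /=. by case: (nth 0 v 0). Qed.
Ltac known ::= first [ apply c_add | apply c_cst | apply c_mul | apply c_pred
  | apply c_sub | apply c_isz | apply c_sg ].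
Lemma c_odd O : computes O oddT (fun v => odd (nth 0 v 0)).
Proof. eapply c_ext. rewrite /oddT. bld.
move=> v /=. elim: (nth 0 v 0) => //= n ->. by case: (odd n). Qed.
Ltac known ::= first [ apply c_add | apply c_cst | apply c_mul | apply c_pred
  | apply c_sub | apply c_isz | apply c_sg | apply c_odd ].
Lemma c_half O : computes O halfT (fun v => (nth 0 v 0)./2).
Proof. eapply c_ext. rewrite /halfT. bld.
move=> v /=. elim: (nth 0 v 0) => //= n ->. by rewrite uphalf_half addnC. Qed.
Lemma c_pow2 O : computes O pow2T (fun v => 2 ^ (nth 0 v 0)).
Proof. eapply c_ext. rewrite /pow2T. bld.
move=> v /=. elim: (nth 0 v 0) => //= n ->. by rewrite expnS mul2n addnn. Qed.
Ltac known ::= first [ apply c_add | apply c_cst | apply c_mul | apply c_pred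
  | apply c_sub | apply c_isz | apply c_sg | apply c_odd | apply c_half | apply c_pow2 ].
Lemma c_divp O : computes O divpT (fun v => nth 0 v 1 %/ 2 ^ (nth 0 v 0)).
Proof. eapply c_ext. rewrite /divpT. bld.
move=> v /=. elim: (nth 0 v 0) => /= [|n ->]; first by rewrite divn1.
by rewrite -divn2 -divnMA expnS mulnC. Qed.

Lemma sum_lt_min z L : \sum_(0 <= i < z) (i < L) = minn z L.
Proof.
elim: z => [|z IH]; first by rewrite big_geq // min0n.
rewrite big_nat_recr //= IH.
case: (leqP z.+1 L) => h; lia.
Qed.

Lemma logn_le z : logn 2 z <= z.
Proof.
case: z => [|z]; first by rewrite logn0.
apply: leq_trans (ltnW (ltn_expl _ (isT : 1 < 2))) _.
exact: dvdn_leq (pfactor_dvdnn 2 z.+1).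
Qed.

Lemma sum_logn z :
  \sum_(0 <= i < z) (z - 2 ^ i.+1 * (z %/ 2 ^ i.+1) == 0) = logn 2 z.
Proof.
case: z => [|z]; first by rewrite big_geq.
rewrite -[RHS](minn_idPr (logn_le z.+1)) -sum_lt_min.
apply: eq_big_nat => i _.
have -> : z.+1 - 2 ^ i.+1 * (z.+1 %/ 2 ^ i.+1) = z.+1 %% 2 ^ i.+1.
  by rewrite {1}(divn_eq z.+1 (2 ^ i.+1)) mulnC addKn.
by rewrite -/(dvdn _ _) pfactor_dvdn.
Qed.

Lemma tl_le x : trunc_log 2 x <= x.
Proof.
case: x => [|x]; first by rewrite trunc_log0.
apply: leq_trans (ltnW (ltn_expl _ (isT : 1 < 2))) _.
exact: trunc_logP.
Qed.

Lemma sum_tl x : \sum_(0 <= i < x) (0 < x %/ 2 ^ i.+1) = trunc_log 2 x.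
Proof.
rewrite -[RHS](minn_idPr (tl_le x)) -sum_lt_min.
apply: eq_big_nat => i _.
rewrite divn_gt0 ?expn_gt0 //.
congr nat_of_bool; apply/idP/idP => h.
  exact: trunc_log_max.
apply: leq_trans (trunc_logP (isT : 1 < 2) _) => //.
  by rewrite leq_exp2l.
by case: x h => //; rewrite trunc_log0.
Qed.

Definition lognT := RComp (RPrec RZero (RComp addT [:: P 1; RComp iszT [:: RComp subT [:: P 2;
  RComp mulT [:: RComp pow2T [:: RComp RSucc [:: P 0]]; RComp divpT [:: RComp RSucc [:: P 0]; P 2]]]]]))
  [:: P 0; P 0].
Definition muT := RComp (RPrec RZero (RComp addT [:: P 1; RComp sgT [:: RComp divpT [:: RComp RSucc [:: P 0]; P 2]]]))
  [:: P 0; P 0].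
Ltac known ::= first [ apply c_add | apply c_cst | apply c_mul | apply c_pred
  | apply c_sub | apply c_isz | apply c_sg | apply c_odd | apply c_half | apply c_pow2
  | apply c_divp ].

Lemma c_logn O : computes O lognT (fun v => logn 2 (nth 0 v 0)).
Proof. eapply c_ext. rewrite /lognT. bld.
move=> v /=. rewrite -sum_logn. set z := nth 0 v 0.
elim: {2 3}z => [|n IH] /=; first by rewrite big_geq.
by rewrite big_nat_recr //= IH.
Qed.
Lemma c_mu O : computes O muT (fun v => trunc_log 2 (nth 0 v 0)).
Proof. eapply c_ext. rewrite /muT. bld.
move=> v /=. rewrite -sum_tl. set z := nth 0 v 0.
elim: {2 3}z => [|n IH] /=; first by rewrite big_geq.
by rewrite big_nat_recr //= IH.
Qed.

Definition nontop y p := odd (y %/ 2 ^ p) && (0 < y %/ 2 ^ p.+1).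
Definition nb y p := p.+1 + logn 2 (y %/ 2 ^ p.+1).
Definition Op (O : nat -> nat -> nat -> nat) s a b := O a b s + (O a b s == 0).
Definition stepz O s p z := nontop z.-1 p * Op O s p (nb z.-1 p).
Definition stepm O s p z m := if odd (m %/ 2 ^ p) then stepz O s p z else z.
Fixpoint runD O s k z m := if k is k'.+1 then runD O s k' (stepm O s k' z m) m else z.
Fixpoint runPR O s j x m :=
  if j is j'.+1 then stepm O s (s - j'.+1) (runPR O s j' x m) m else x.+1.
Fixpoint popD k m := if k is k'.+1 then popD k' m + odd (m %/ 2 ^ k') else 0.
Definition wt r k m := if odd (popD k m) then 1 else r.-1.
Definition gk O r s k z m := if (0 < m) && (0 < runD O s k z m) then wt r k m else 0.
Definition G O r s k z := \sum_(0 <= m < 2 ^ k) gk O r s k z m.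
Definition col O r x := G O r (trunc_log 2 x) (trunc_log 2 x) x.+1 %% r.

Lemma runPR_runD O s x m j : j <= s ->
  runD O s s x.+1 m = runD O s (s - j) (runPR O s j x m) m.
Proof.
elim: j => [|j IH] hj; first by rewrite subn0.
rewrite IH ?(ltnW hj) //.
have -> : s - j = (s - j.+1).+1 by lia.
by [].
Qed.

Definition nontopT := RComp mulT [:: RComp oddT [:: RComp divpT [:: P 1; P 0]];
  RComp sgT [:: RComp divpT [:: RComp RSucc [:: P 1]; P 0]]].
Definition nbT := RComp addT [:: RComp RSucc [:: P 1];
  RComp lognT [:: RComp divpT [:: RComp RSucc [:: P 1]; P 0]]].
Definition OpT := RComp addT [:: ROracle; RComp iszT [:: ROracle]].
Definition stepzT := RComp mulT [:: RComp nontopT [:: RComp predT [:: P 1]; P 0];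
  RComp OpT [:: P 0; RComp nbT [:: RComp predT [:: P 1]; P 0]; P 2]].
Definition bitT := RComp oddT [:: RComp divpT [:: P 0; P 2]].
Definition stepmT := RComp addT [:: RComp mulT [:: bitT; RComp stepzT [:: P 0; P 1; P 3]];
  RComp mulT [:: RComp iszT [:: bitT]; P 1]].
Definition runT := RPrec (RComp RSucc [:: P 0])
  (RComp stepmT [:: RComp subT [:: P 4; RComp RSucc [:: P 0]]; P 1; P 3; P 4]).
Definition runCT := RComp runT [:: P 2; P 0; P 1; P 2].
Definition popT := RComp (RPrec RZero (RComp addT [:: P 1; RComp oddT [:: RComp divpT [:: P 0; P 2]]]))
  [:: P 1; P 0].
Definition ppT := RComp popT [:: P 0; P 2].
Definition wtT r := RComp addT [:: RComp oddT [:: ppT];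
  RComp mulT [:: RComp iszT [:: RComp oddT [:: ppT]]; cst r.-1]].
Definition gkT r := RComp mulT [:: RComp sgT [:: P 0];
  RComp mulT [:: RComp sgT [:: RComp runCT [:: P 1; P 0; P 2]]; wtT r]].
Definition GT r := RComp (RPrec RZero (RComp addT [:: P 1; RComp (gkT r) [:: P 0; P 2; P 3]]))
  [:: RComp pow2T [:: P 1]; P 0; P 1].
Definition modrT r := RComp (RPrec RZero (RComp mulT [:: RComp RSucc [:: P 1];
  RComp sgT [:: RComp subT [:: cst r.-1; P 1]]])) [:: P 0].
Definition colT r := RComp (modrT r) [:: RComp (GT r) [:: P 0; RComp muT [:: P 0]]].

Ltac known ::= first [ apply c_add | apply c_cst | apply c_mul | apply c_pred
  | apply c_sub | apply c_isz | apply c_sg | apply c_odd | apply c_half | apply c_pow2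
  | apply c_divp | apply c_logn | apply c_mu ].

Lemma c_nontop O : computes O nontopT (fun v => nontop (nth 0 v 0) (nth 0 v 1)).
Proof. eapply c_ext. rewrite /nontopT. bld. move=> v /=. by rewrite mulnb. Qed.
Lemma c_nb O : computes O nbT (fun v => nb (nth 0 v 0) (nth 0 v 1)).
Proof. eapply c_ext. rewrite /nbT. bld. by move=> v /=. Qed.
Lemma c_Op O : computes O OpT (fun v => Op O (nth 0 v 2) (nth 0 v 0) (nth 0 v 1)).
Proof. eapply c_ext. rewrite /OpT. bld. by move=> v /=. Qed.
Ltac known ::= first [ apply c_add | apply c_cst | apply c_mul | apply c_pred
  | apply c_sub | apply c_isz | apply c_sg | apply c_odd | apply c_half | apply c_pow2
  | apply c_divp | apply c_logn | apply c_mu | apply c_nontop | apply c_nb | apply c_Op ].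
Lemma c_stepz O : computes O stepzT (fun v => stepz O (nth 0 v 2) (nth 0 v 0) (nth 0 v 1)).
Proof. eapply c_ext. rewrite /stepzT. bld. by move=> v /=. Qed.
Ltac known ::= first [ apply c_add | apply c_cst | apply c_mul | apply c_pred
  | apply c_sub | apply c_isz | apply c_sg | apply c_odd | apply c_half | apply c_pow2
  | apply c_divp | apply c_logn | apply c_mu | apply c_nontop | apply c_nb | apply c_Op
  | apply c_stepz ].
Lemma c_stepm O : computes O stepmT
  (fun v => stepm O (nth 0 v 3) (nth 0 v 0) (nth 0 v 1) (nth 0 v 2)).
Proof. eapply c_ext. rewrite /stepmT /bitT. bld. move=> v /=. rewrite /stepm.
by case: odd => /=; rewrite ?mul1n ?mul0n ?addn0. Qed.
Ltac known ::= first [ apply c_add | apply c_cst | apply c_mul | apply c_pred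
  | apply c_sub | apply c_isz | apply c_sg | apply c_odd | apply c_half | apply c_pow2
  | apply c_divp | apply c_logn | apply c_mu | apply c_nontop | apply c_nb | apply c_Op
  | apply c_stepz | apply c_stepm ].
Lemma c_runC O : computes O runCT
  (fun v => runPR O (nth 0 v 2) (nth 0 v 2) (nth 0 v 0) (nth 0 v 1)).
Proof. eapply c_ext. rewrite /runCT /runT. bld. move=> v /=.
move: (nth 0 v 0) (nth 0 v 1) (nth 0 v 2) => x m s.
elim: {2 4}s => //= j ->. by []. Qed.
Lemma c_pop O : computes O popT (fun v => popD (nth 0 v 1) (nth 0 v 0)).
Proof. eapply c_ext. rewrite /popT. bld. move=> v /=.
elim: (nth 0 v 1) => //= j ->. by []. Qed.
Ltac known ::= first [ apply c_add | apply c_cst | apply c_mul | apply c_pred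
  | apply c_sub | apply c_isz | apply c_sg | apply c_odd | apply c_half | apply c_pow2
  | apply c_divp | apply c_logn | apply c_mu | apply c_nontop | apply c_nb | apply c_Op
  | apply c_stepz | apply c_stepm | apply c_runC | apply c_pop ].
Lemma c_gk r O : computes O (gkT r)
  (fun v => gk O r (nth 0 v 2) (nth 0 v 2) (nth 0 v 1).+1 (nth 0 v 0)).
Proof. eapply c_ext. rewrite /gkT /wtT /ppT. bld. move=> v /=.
move: (nth 0 v 0) (nth 0 v 1) (nth 0 v 2) => m x s.
rewrite /gk (runPR_runD O x m (leqnn s)) subnn /= /wt.
case: (0 < m); case: (0 < runPR O s s x m); case: odd => /=; lia.
Qed.
Ltac known ::= first [ apply c_add | apply c_cst | apply c_mul | apply c_pred
  | apply c_sub | apply c_isz | apply c_sg | apply c_odd | apply c_half | apply c_pow2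
  | apply c_divp | apply c_logn | apply c_mu | apply c_nontop | apply c_nb | apply c_Op
  | apply c_stepz | apply c_stepm | apply c_runC | apply c_pop | apply c_gk ].
Lemma c_G r O : computes O (GT r)
  (fun v => G O r (nth 0 v 1) (nth 0 v 1) (nth 0 v 0).+1).
Proof. eapply c_ext. rewrite /GT. bld. move=> v /=.
move: (nth 0 v 0) (nth 0 v 1) => x s. rewrite /G.
elim: (2 ^ s) => [|n IH] /=; first by rewrite big_geq.
by rewrite big_nat_recr //= IH.
Qed.
Lemma c_modr r O : 0 < r -> computes O (modrT r) (fun v => nth 0 v 0 %% r).
Proof. move=> r0. eapply c_ext. rewrite /modrT. bld. move=> v /=.
elim: (nth 0 v 0) => /= [|n ->]; first by rewrite mod0n.
have := ltn_pmod n r0.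
rewrite -[n.+1]addn1 -modnDml.
move: (n %% r) => k hk.
case: (ltnP k r.-1) => h.
  rewrite subn_gt0 h muln1 modn_small; lia.
rewrite subn_gt0 ltnNge h muln0.
have -> : k + 1 = r by lia.
by rewrite modnn.
Qed.
Ltac known ::= first [ apply c_add | apply c_cst | apply c_mul | apply c_pred
  | apply c_sub | apply c_isz | apply c_sg | apply c_odd | apply c_half | apply c_pow2
  | apply c_divp | apply c_logn | apply c_mu | apply c_G ].
Lemma c_col r O : 0 < r -> computes O (colT r) (fun v => col O r (nth 0 v 0)).
Proof. move=> r0. eapply c_ext. rewrite /colT. apply: c_comp. exact: c_modr.
bld. by move=> v /=. Qed.

Section Comb.
Variables (O : nat -> nat -> nat -> nat) (r s : nat).
Hypothesis r0 : 0 < r.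

Definition H a z := \sum_(0 <= m < 2 ^ a)
  (if 0 < runD O s a z m then (if odd (popD a m) then r.-1 else 1) else 0).

Lemma stepz0 p : stepz O s p 0 = 0.
Proof. by rewrite /stepz /nontop /= div0n. Qed.

Lemma runD_z0 k m : runD O s k 0 m = 0.
Proof. elim: k => //= k IH. rewrite /stepm. by case: ifP; rewrite ?stepz0. Qed.

Lemma runD_m0 k z : runD O s k z 0 = z.
Proof. elim: k z => //= k IH z. by rewrite /stepm div0n /= IH. Qed.

Lemma popD_m0 k : popD k 0 = 0.
Proof. elim: k => //= k ->. by rewrite div0n. Qed.

Lemma runD_bits k z m1 m2 : (forall p, p < k -> odd (m1 %/ 2 ^ p) = odd (m2 %/ 2 ^ p)) ->
  runD O s k z m1 = runD O s k z m2.
Proof.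
elim: k z => //= k IH z hb. rewrite /stepm hb // IH // => p hp. apply: hb. exact: ltnW.
Qed.

Lemma popD_bits k m1 m2 : (forall p, p < k -> odd (m1 %/ 2 ^ p) = odd (m2 %/ 2 ^ p)) ->
  popD k m1 = popD k m2.
Proof.
elim: k => //= k IH hb. rewrite hb // IH // => p hp. apply: hb. exact: ltnW.
Qed.

Lemma bits_add a m p : p < a -> odd ((m + 2 ^ a) %/ 2 ^ p) = odd (m %/ 2 ^ p).
Proof.
move=> hp. have -> : 2 ^ a = 2 ^ (a - p) * 2 ^ p by rewrite -expnD subnK // ltnW.
rewrite divnDr ?dvdn_mull // mulnK ?expn_gt0 // oddD oddX /=.
by rewrite subn_eq0 leqNgt hp /= addbF.
Qed.

Lemma top_add a m : m < 2 ^ a -> (m + 2 ^ a) %/ 2 ^ a = 1.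
Proof. move=> h. by rewrite divnDr // divnn expn_gt0 divn_small. Qed.

Lemma Gsplit k z : G O r s k z = \sum_(0 <= a < k) H a (stepz O s a z).
Proof.
elim: k z => [|k IH] z; first by rewrite /G expn0 big_nat1 big_geq // /gk ltnn.
rewrite big_nat_recr //= -IH /G expnS mul2n -addnn.
rewrite (big_cat_nat (leq0n (2 ^ k)) (leq_addr _ _)) /=.
congr (_ + _).
  apply: eq_big_nat => m /andP [_ hm].
  by rewrite /gk /= /stepm divn_small //= /wt /= divn_small // addn0.

rewrite -{1}[2 ^ k]add0n big_addn addnK /H.
apply: eq_big_nat => m /andP [_ hm].
rewrite /gk /= /stepm top_add //= addn_gt0 expn_gt0 orbT /=.
rewrite (@runD_bits k _ (m + 2 ^ k) m); last by move=> p hp; rewrite bits_add.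
rewrite /wt /=.
rewrite (@popD_bits k (m + 2 ^ k) m); last by move=> p hp; rewrite bits_add.
rewrite top_add // /=.
by rewrite addn1 /=; case: odd.
Qed.

Lemma HG a z : (H a z + G O r s a z) %% r = (0 < z) %% r.
Proof.
rewrite /H /G -big_split /= big_ltn ?expn_gt0 // runD_m0 popD_m0 /= /gk /= addn0.
have hd : r %| \sum_(1 <= i < 2 ^ a)
  ((if 0 < runD O s a z i then if odd (popD a i) then r.-1 else 1 else 0) +
   (if (0 < i) && (0 < runD O s a z i) then wt r a i else 0)).
  rewrite big_nat_cond; apply: dvdn_sum => i /andP [/andP [hi _] _].
  case: i hi => // i _.
  rewrite /= /wt. case: (0 < _) => //. case: odd => /=; rewrite ?addn1 ?prednK //.
  by rewrite addnC addn1 prednK.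
rewrite -(divnK hd) addnC modnMDl. by case: (0 < z).
Qed.
End Comb.

Section Edge.
Variables (O : nat -> nat -> nat -> nat) (r : nat).
Hypothesis r0 : 0 < r.
Variables (w n v : nat).
Hypothesis w0 : 0 < w.
Let L := logn 2 w.
Let s := trunc_log 2 w.
Hypothesis hnL : n < L.
Hypothesis hv1 : 2 ^ n <= v.
Hypothesis hv2 : v < 2 ^ n.+1.
Hypothesis hO : O n L s = v.+1.

Lemma F1 : 2 ^ L %| w. Proof. exact: pfactor_dvdnn. Qed.
Lemma F2 a : a <= L -> 2 ^ a %| w.
Proof. move=> h. apply: dvdn_trans F1. by rewrite dvdn_exp2l. Qed.
Lemma F3 : v < 2 ^ L.
Proof. apply: leq_trans hv2 _. by rewrite leq_exp2l. Qed.
Lemma F4 a : L <= a -> (w + v) %/ 2 ^ a = w %/ 2 ^ a.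
Proof.
move=> h. have -> : 2 ^ a = 2 ^ L * 2 ^ (a - L) by rewrite -expnD subnKC.
by rewrite !divnMA divnDl ?F1 // (divn_small F3) addn0.
Qed.
Lemma F5 a : a < L -> ~~ odd (w %/ 2 ^ a).
Proof.
move=> h. have hd := F2 h.
rewrite -(divnK hd) expnS mulnA mulnK ?expn_gt0 //.
by rewrite oddM andbF.
Qed.
Lemma F6 a : a <= L -> (w + v) %/ 2 ^ a = w %/ 2 ^ a + v %/ 2 ^ a.
Proof. move=> h. by rewrite divnDl ?F2. Qed.
Lemma F7 a : n < a -> (w + v) %/ 2 ^ a = w %/ 2 ^ a.
Proof.
move=> h. case: (leqP a L) => ha; last by rewrite F4 // ltnW.
rewrite F6 // (divn_small (leq_trans hv2 _)) ?addn0 //.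
by rewrite leq_exp2l.
Qed.
Lemma hLs : L <= s.
Proof. apply: trunc_log_max => //. exact: dvdn_leq w0 F1. Qed.

Lemma LA A B k : 2 ^ k %| A -> 0 < B -> B < 2 ^ k -> logn 2 (A + B) = logn 2 B.
Proof.
move=> hA hB0 hBk.
set e := logn 2 B.
have he : 2 ^ e %| B := pfactor_dvdnn 2 B.
have hek : e < k.
  have : 2 ^ e < 2 ^ k := leq_ltn_trans (dvdn_leq hB0 he) hBk.
  by rewrite ltn_exp2l.
have hAe : forall j, j <= k -> 2 ^ j %| A.
  by move=> j hj; apply: dvdn_trans hA; rewrite dvdn_exp2l.
have hAB0 : 0 < A + B by rewrite addn_gt0 hB0 orbT.
apply/eqP; rewrite eqn_leq; apply/andP; split.
  rewrite leqNgt -(@pfactor_dvdn 2 e.+1 (A + B)) //.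
  apply/negP => hd.
  have : 2 ^ e.+1 %| B by rewrite -(dvdn_addr _ (hAe _ hek)).
  by rewrite pfactor_dvdn // ltnn.
by rewrite -(pfactor_dvdn _ _ hAB0) // dvdn_add // hAe // ltnW.
Qed.

Lemma S_hi a : n < a -> stepz O s a (w + v).+1 = stepz O s a w.+1.
Proof. move=> h. by rewrite /stepz /nontop /nb /= !F7 // ltnW. Qed.

Lemma S_lo0 a : a <= n -> stepz O s a w.+1 = 0.
Proof. move=> h. rewrite /stepz /nontop /= (negbTE (F5 (leq_ltn_trans h hnL))). by []. Qed.

Lemma S_lo a : a < n -> stepz O s a (w + v).+1 = stepz O s a v.+1.
Proof.
move=> h. have haL : a < L := ltn_trans h hnL.
have hv : 2 ^ a.+1 <= v by apply: leq_trans hv1; rewrite leq_exp2l.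
rewrite /stepz /nontop /nb /= F6 ?(ltnW haL) // oddD (negbTE (F5 haL)) /=.
have hvp : 0 < v %/ 2 ^ a.+1 by rewrite divn_gt0 ?expn_gt0.
rewrite F6 // hvp addn_gt0 hvp orbT /=.
rewrite (@LA _ _ (L - a.+1)) //.
- have e : 2 ^ L = 2 ^ (L - a.+1) * 2 ^ a.+1 by rewrite -expnD subnK.
  by rewrite -(divnK F1) e mulnA mulnK ?expn_gt0 // dvdn_mull.
- rewrite ltn_divLR ?expn_gt0 // -expnD subnK //. exact: F3.
Qed.

Lemma S_n : stepz O s n (w + v).+1 = v.+1.
Proof.
have hvn : v %/ 2 ^ n = 1.
  apply/eqP; rewrite eqn_leq leq_divRL ?expn_gt0 // mul1n hv1 andbT.
  by rewrite -ltnS ltn_divLR ?expn_gt0 // -expnS.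
rewrite /stepz /nontop /nb /= F6 ?(ltnW hnL) // hvn addn1 /= (negbTE (F5 hnL)) /=.
rewrite F7 // divn_gt0 ?expn_gt0 // (dvdn_leq w0 (F2 hnL)) /=.
rewrite logn_div ?F2 // pfactorK // subnKC // mul1n /Op.
by move: hO; rewrite /L => -> /=; rewrite addn0.
Qed.

Lemma tl_wv : trunc_log 2 (w + v) = s.
Proof.
apply: trunc_log_eq => //. apply/andP; split.
  apply: leq_trans (leq_addr _ _). exact: trunc_logP.
have : (w + v) %/ 2 ^ s.+1 = 0.
  rewrite F7; last by apply: leq_trans hLs; apply: leq_trans hnL.
  by rewrite divn_small // trunc_log_ltn.
move/eqP. rewrite -leqn0 -ltnS ltn_divLR ?expn_gt0 // mul1n. by [].
Qed.

Lemma H0 a : H O r s a 0 = 0.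
Proof. rewrite /H big1 // => m _. by rewrite runD_z0. Qed.

Lemma edge : col O r (w + v) = (col O r w).+1 %[mod r].
Proof.
have hns : n < s := leq_trans hnL hLs.
rewrite /col tl_wv modn_mod -[(_ %% r).+1]addn1 modnDml.
change (trunc_log 2 w) with s.
rewrite !Gsplit.
rewrite 2!(@big_cat_nat _ _ _ n 0 s _ _ (leq0n n) (ltnW hns)) /= 2!(@big_ltn _ _ _ n s _ hns).
rewrite S_n S_lo0 // H0 add0n.
have -> : \sum_(0 <= i < n) H O r s i (stepz O s i w.+1) = 0.
  rewrite big1_seq // => a; rewrite mem_index_iota => /andP [_ ha].
  by rewrite S_lo0 ?H0 // ltnW.
have -> : \sum_(0 <= i < n) H O r s i (stepz O s i (w + v).+1) = G O r s n v.+1.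
  rewrite Gsplit. apply: eq_big_nat => a /andP [_ ha]. by rewrite S_lo.
have -> : \sum_(n.+1 <= i < s) H O r s i (stepz O s i (w + v).+1) =
          \sum_(n.+1 <= i < s) H O r s i (stepz O s i w.+1).
  apply: eq_big_nat => a /andP [ha _]. by rewrite S_hi.
rewrite addnA [G _ _ _ _ _ + _]addnC -modnDml HG // modnDml.
by rewrite addnC.
Qed.
End Edge.

Theorem corollary3p2 (r : nat) (hr : 1 < r) :
  exists e : rterm,
  forall Q : nat -> nat -> nat -> option nat,
    recursive_domain Q ->
    (forall n k s v, Q n k s = Some v -> inB n v) ->
    exists c : nat -> nat,
      (forall x, c x < r) /\
      (forall x, eval (oracle_of Q) e [:: x] (c x)) /\
      (forall w, 0 < w -> forall n, n < blambda w ->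
         forall v, Q n (blambda w) (bmu w) = Some v ->
           c (w + v) = (c w).+1 %[mod r]).
Proof.
have r0 : 0 < r by apply: ltn_trans hr.
exists (colT r) => Q _ hQ.
exists (col (oracle_of Q) r); split; [|split].
- move=> x. by rewrite /col ltn_pmod.
- move=> x. exact: (c_col (oracle_of Q) r0 [:: x]).
- move=> w w0 n hn v hv.
  have [v0 hmu] := hQ _ _ _ _ hv.
  apply: (@edge _ _ r0 w n v) => //.
  + by rewrite -hmu /bmu; apply: trunc_logP.
  + by rewrite -hmu /bmu; apply: trunc_log_ltn.
  + by rewrite /oracle_of hv.
Qed.
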